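(* Let $b,n,c$ be positive integers with $4\leqslant 4b\leqslant n$. For every abelian group $\Gamma$ of order $4nbc$ there exists a diagonal $\mathrm{MRS}_\Gamma(n;4b;c)$.
   Context: For positive integers $m,n,s,k,c$ and an abelian group $\Gamma$ of order $nkc$, an $\mathrm{MRS}_\Gamma(m,n;s,k;c)$ is a set of $c$ partially filled $m\times n$ arrays (some cells may be empty) with entries in $\Gamma$ such that: every element of $\Gamma$ appears exactly once and in a unique array; in every array each row contains exactly $s$ filled cells and each column contains exactly $k$ filled cells; and there exist $\omega,\delta\in\Gamma$ such that in every array each row sum is $\omega$ and each column sum is $\delta$. $\mathrm{MRS}_\Gamma(n;k;c)$ denotes $\mathrm{MRS}_\Gamma(n,n;k,k;c)$. In an $n\times n$ array, for $0\leqslant \ell\leqslant n-1$ the diagonal $D_\ell$ is the set of cells $(i,j)$ with $j-i\equiv \ell\pmod n$. An $\mathrm{MRS}_\Gamma(n;k;c)$ is diagonal if, in each of its arrays, the filled cells are exactly the cells of $k$ consecutive diagonals $D_{t},\ldots,D_{t+k-1}$ (indices modulo $n$). *)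

(* Defs.v *)
From mathcomp Require Import all_boot all_order all_algebra.
Set Implicit Arguments. Unset Strict Implicit. Unset Printing Implicit Defensive.
Import GRing.Theory.
Local Open Scope ring_scope.

(* A family of c partially filled m x n arrays with entries in G:
   A a i j = Some g  means cell (i,j) of array a is filled with g,
   A a i j = None    means the cell is empty. *)
Definition arrays (G : Type) (m n c : nat) := 'I_c -> 'I_m -> 'I_n -> option G.

Definition is_MRS (G : finZmodType) (m n s k c : nat) (A : arrays G m n c) : Prop :=
  [/\ #|G| = (n * k * c)%N,
      (forall g : G,
          #|[set t : 'I_c * 'I_m * 'I_n | A t.1.1 t.1.2 t.2 == Some g]| = 1%N),
      (forall (a : 'I_c) (i : 'I_m), #|[set j : 'I_n | A a i j != None]| = s),
      (forall (a : 'I_c) (j : 'I_n), #|[set i : 'I_m | A a i j != None]| = k) &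
      exists (w d : G),
        (forall (a : 'I_c) (i : 'I_m), \sum_(j : 'I_n) odflt 0 (A a i j) = w) /\
        (forall (a : 'I_c) (j : 'I_n), \sum_(i : 'I_m) odflt 0 (A a i j) = d)].

Definition on_diag (n : nat) (i j : 'I_n) (l : nat) : bool :=
  ((i + l) %% n)%N == j.

Definition diagonal_arrays (G : Type) (n k c : nat) (A : arrays G n n c) : Prop :=
  forall a : 'I_c, exists t : 'I_n, forall i j : 'I_n,
    isSome (A a i j) = [exists l : 'I_k, on_diag i j (t + l)%N].

(* Main.v *)
Require Import Defs.
From mathcomp Require Import all_boot all_order all_fingroup all_algebra all_solvable.
From mathcomp Require Import zify.
Import FinRing.Theory.
Set Implicit Arguments. Unset Strict Implicit. Unset Printing Implicit Defensive.
Import GRing.Theory.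
Local Open Scope ring_scope.

Section Klein.
Variables (G : finZmodType) (h d : G).
Hypotheses (dn0 : d != 0) (dd : d + d = 0) (hn : forall g : G, g + g != h)
  (hdn : forall g : G, g + g != h + d).

Definition sig (s t : bool) (x : G) : G :=
  (if s then h - x else x) + (if t then d else 0).

Lemma oppd : - d = d.
Proof. by apply/eqP; rewrite eq_sym -subr_eq0 opprK dd. Qed.

Lemma sigC s t s' t' x : sig s t (sig s' t' x) = sig (s (+) s') (t (+) t') x.
Proof.
rewrite /sig; case: s; case: s'; case: t; case: t' => /=;
  rewrite ?addr0 ?opprD ?opprK ?oppd ?addrA ?dd ?addr0 //.
all: by rewrite ?subrr ?add0r -?addrA ?dd ?addr0.
Qed.

Lemma sig00 x : sig false false x = x.
Proof. by rewrite /sig addr0. Qed.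

Lemma sig_fix s t x : sig s t x = x -> s = false /\ t = false.
Proof.
rewrite /sig; case: s; case: t => //=.
- move/eqP; rewrite addrAC subr_eq => /eqP e.
  by have := hdn x; rewrite e eqxx.
- move/eqP; rewrite addr0 subr_eq => /eqP e.
  by have := hn x; rewrite e eqxx.
- by rewrite -[X in _ = X]addr0 => /addrI e; move: dn0; rewrite e eqxx.
Qed.

Lemma sig_inj s t s' t' x : sig s t x = sig s' t' x -> s = s' /\ t = t'.
Proof.
move/(congr1 (sig s' t')); rewrite !sigC !addbb sig00 => /sig_fix [e1 e2].
by move: e1 e2; case: s; case: s'; case: t; case: t'.
Qed.

Definition orb x : {set G} := [set sig st.1 st.2 x | st : bool * bool].
Definition rep x := odflt x [pick y in orb x].

Lemma mem_orb x : x \in orb x.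
Proof. by apply/imsetP; exists (false, false); rewrite ?sig00. Qed.

Lemma orb_sig s t x : orb (sig s t x) = orb x.
Proof.
apply/setP => y; apply/imsetP/imsetP => [[[s' t'] _ ->]|[[s' t'] _ ->]] /=.
  by exists (s' (+) s, t' (+) t) => //; rewrite sigC.
exists (s' (+) s, t' (+) t) => //=.
by rewrite sigC; case: s; case: t; rewrite /= ?addbF ?addbT ?negbK.
Qed.

Lemma rep_orb x : rep x \in orb x.
Proof.
rewrite /rep; case: pickP => [y //|H].
by have := H x; rewrite /= mem_orb.
Qed.

Lemma rep_sig s t x : rep (sig s t x) = rep x.
Proof.
rewrite /rep orb_sig; case: pickP => [y //|H].
by have := H x; rewrite /= mem_orb.
Qed.

Lemma rep_mem y x : y \in orb x -> rep y = rep x.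
Proof. by case/imsetP => [[s t] _ ->]; apply: rep_sig. Qed.

Lemma rep_idem x : rep (rep x) = rep x.
Proof. exact: rep_mem (rep_orb x). Qed.

Lemma sig_rep x : exists s t, x = sig s t (rep x).
Proof.
have /imsetP [[s t] _ /= e] := rep_orb x.
by exists s, t; rewrite e sigC !addbb sig00.
Qed.

Definition R := [set x | rep x == x].

Lemma card_R : (#|G| <= 4 * #|R|)%N.
Proof.
pose stf x := odflt (false, false) [pick st : bool * bool | x == sig st.1 st.2 (rep x)].
have stfP x : x = sig (stf x).1 (stf x).2 (rep x).
  rewrite /stf; case: pickP => [st /eqP //|H].
  by have [s [t e]] := sig_rep x; have := H (s, t); rewrite /= -e eqxx.
pose phi x := (rep x, stf x).
have phi_inj : injective phi.
  by move=> x y [e1 e2]; rewrite (stfP x) (stfP y) e1 e2.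
rewrite -cardsT -(card_imset _ phi_inj).
have -> : (4 * #|R| = #|setX R [set: bool * bool]|)%N.
  by rewrite cardsX cardsT card_prod card_bool mulnC.
apply: subset_leq_card; apply/subsetP => z /imsetP [x _ ->].
by rewrite inE /= inE rep_idem eqxx inE.
Qed.

Lemma exists_iota (T : finType) : (4 * #|T| <= #|G|)%N ->
  exists f : T -> G, injective f /\ forall q, rep (f q) = f q.
Proof.
move=> HT4; have HT : (#|T| <= #|R|)%N.
  by move: (leq_trans HT4 card_R); rewrite leq_pmul2l.
exists (fun q => enum_val (widen_ord HT (enum_rank q))); split.
  move=> x y /enum_val_inj [] /= e; apply: enum_rank_inj; exact: val_inj.
by move=> q; have := enum_valP (widen_ord HT (enum_rank q)); rewrite inE => /eqP.
Qed.

Lemma row_blk x y :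
  sig true true y + sig false false x + sig false true y + sig true false x = h + h.
Proof.
rewrite /sig /= !addr0 -!addrA.
rewrite [d + (x + _)]addrCA [d + (_ + _)]addrCA.
by rewrite [d + (d + _)]addrA dd add0r [x + (y + _)]addrCA [x + (h - x)]addrC subrK addKr.
Qed.

Lemma col_blk x y :
  sig true true x + sig false false x + sig false true y + sig true false y
  = h + d + (h + d).
Proof.
rewrite /sig /= !addr0 -!addrA.
by rewrite [d + (x + _)]addrCA addKr [y + (d + _)]addrCA [y + (h - y)]addrC subrK (addrC d h).
Qed.

End Klein.
Lemma order2_add (G : finZmodType) (x : G) : #[x]%g = 2%N -> x + x = 0 /\ x != 0.
Proof.
move=> ox; split.
  by have := expg_order x; rewrite ox zmodXgE mulr2n.
by apply/eqP=> x0; move: ox; rewrite x0 -zmod1gE order1.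
Qed.

Lemma klein_exists (G : finZmodType) : (4 %| #|G|)%N ->
  exists h d : G, [/\ d != 0, d + d = 0, forall g : G, g + g != h
                    & forall g : G, g + g != h + d].
Proof.
move=> d4.
pose f := fun x : G => (x * x)%g.
have fM : {in [set: G] &, {morph f : x y / (x * y)%g}}.
  by move=> x y _ _; rewrite /f !zmodMgE addrACA.
pose fm := Morphism fM.
set K := ('ker fm)%g. set D := (fm @* [set: G])%g.
have cardG : (#|K| * #|D|)%N = #|G|.
  by rewrite card_morphim setIid -cardsT (Lagrange (subsetT _)).
have inD g : g + g \in D.
  by rewrite -[g + g]zmodMgE; apply: mem_morphim; rewrite ?inE.
have d2 : (2 %| #|[set: G]|)%N by rewrite cardsT (dvdn_trans _ d4).
have [x0 _ ox0] := @Cauchy _ 2 [set: G]%G isT d2.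
have [x0x0 x0n0] := order2_add ox0.
have inK y : (y \in K) = (y + y == 0).
  apply/idP/eqP => [/mker /= | e].
    by rewrite /f zmodMgE.
  by apply/kerP; rewrite ?inE //= /f zmodMgE.
have x0K : x0 \in K by rewrite inK x0x0.
have Dpos : (0 < #|D|)%N by apply/card_gt0P; exists (0 + 0).
have Kpos : (0 < #|K|)%N by apply/card_gt0P; exists x0.
have [K2|K2] := leqP #|K| 2.
  have K2e : #|K| = 2%N.
    apply/eqP; rewrite eqn_leq K2 /=.
    have <- : #|[set 0; x0]| = 2%N by rewrite cards2 eq_sym x0n0.
    apply: subset_leq_card; apply/subsetP => z.
    by case/set2P => ->; rewrite inK ?x0x0 ?addr0.
  have dD : (2 %| #|D|)%N.
    by move: d4; rewrite -cardG K2e (_ : 4 = 2 * 2)%N // dvdn_pmul2l.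
  have [y yD oy] := @Cauchy _ 2 D isT dD.
  have [yy yn0] := order2_add oy.
  have : ~~ ([set: G] \subset D).
    apply/negP => /subset_leq_card; rewrite cardsT -cardG K2e.
    by rewrite leqNgt ltn_Pmull.
  case/subsetPn => h _ hD.
  exists h, y; split => // g; apply/eqP => e.
    by move: hD; rewrite -e inD.
  move: hD; have -> : h = (g + g) + y by rewrite e -addrA yy addr0.
  by rewrite -zmodMgE groupM.
pose U := D :|: [set z + x0 | z in D].
have : ~~ ([set: G] \subset U).
  apply/negP => /subset_leq_card; rewrite cardsT -cardG.
  have hU : (#|U| <= #|D| + #|D|)%N.
    by rewrite /U (leq_trans (leq_card_setU _ _)) // leq_add2l leq_imset_card.
  move=> H; have H2 := leq_trans H hU.
  have H3 := leq_mul K2 (leqnn #|D|).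
  have H4 := leq_trans H3 H2.
  move: H4 Dpos. clear. lia.
case/subsetPn => h _ hU.
exists h, x0; split => // g; apply/eqP => e.
  by move: hU; rewrite -e inE inD.
move: hU; have -> : h = (g + g) + x0 by rewrite e -addrA x0x0 addr0.
by move/negP; apply; rewrite /U inE; apply/orP; right; apply: imset_f (inD g).
Qed.
Lemma blk (q p : nat) : (p < 4)%N ->
  [/\ ((4 * q + p) %/ 4 = q)%N, ((4 * q + p) %% 4 = p)%N & odd (4 * q + p) = odd p].
Proof.
move=> p4; rewrite mulnC divnMDl // divn_small // addn0 modnMDl modn_small //.
by rewrite oddD oddM /= andbF.
Qed.

Lemma decode (l l' : nat) : (l %/ 4 = l' %/ 4)%N -> odd l = odd l' ->
  (2 <= l %% 4)%N = (2 <= l' %% 4)%N -> l = l'.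
Proof.
have Ho x : odd x = odd (x %% 4) by rewrite {1}(divn_eq x 4) oddD oddM /= andbF.
move=> e1; rewrite (Ho l) (Ho l') => e2 e3.
rewrite (divn_eq l 4) (divn_eq l' 4) e1; congr (_ + _)%N.
move: e2 e3 (ltn_pmod l (isT : (0 < 4)%N)) (ltn_pmod l' (isT : (0 < 4)%N)).
case: (l %% 4)%N => [|[|[|[|?]]]]; case: (l' %% 4)%N => [|[|[|[|?]]]] //.
Qed.

Lemma sum4 (V : nmodType) (b0 : nat) (F : nat -> V) :
  \sum_(0 <= k < 4 * b0) F k =
  \sum_(0 <= q < b0) (F (4 * q)%N + F (4 * q + 1)%N + F (4 * q + 2)%N + F (4 * q + 3)%N).
Proof.
elim: b0 => [|b0 IH]; first by rewrite muln0 !big_geq.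
rewrite [in RHS]big_nat_recr //= -IH.
have -> : (4 * b0.+1 = (4 * b0 + 3).+1)%N by lia.
rewrite big_nat_recr ?leq_addr //.
have -> : (4 * b0 + 3 = (4 * b0 + 2).+1)%N by lia.
rewrite big_nat_recr ?leq_addr //.
have -> : (4 * b0 + 2 = (4 * b0 + 1).+1)%N by lia.
rewrite big_nat_recr ?leq_addr //.
rewrite addn1 big_nat_recr ?leq_addr //.
have E1 : (4*b0+1 = (4*b0).+1)%N by lia.
have E2 : (4*b0+2 = (4*b0).+2)%N by lia.
have E3 : (4*b0+3 = (4*b0).+3)%N by lia.
by rewrite ?E1 ?E2 ?E3 /= !addrA.
Qed.

Section Construction.
Variables (b' m c' : nat) (G : finZmodType) (h d : G).
Hypotheses (dn0 : d != 0) (dd : d + d = 0) (hn : forall g : G, g + g != h)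
  (hdn : forall g : G, g + g != h + d).
Local Notation n := m.+4.
Local Notation b := b'.+1.
Local Notation c := c'.+1.
Hypothesis bn : (4 * b <= n)%N.
Variable iota : 'I_c * 'I_b * 'I_n -> G.
Hypotheses (iota_inj : injective iota) (iota_rep : forall q, rep h d (iota q) = iota q).

Definition rr (l : nat) : bool := ~~ odd l.
Definition cc (l : nat) : bool := (2 <= l %% 4)%N.

Definition val_at (a : 'I_c) (l : nat) (k : 'I_n) : G :=
  sig h d (rr l (+) cc l) (rr l) (iota (a, inord (l %/ 4), k - (rr l : nat)%:R)).

Definition dg (i j : 'I_n) : 'I_n := j - i.

Definition cell (a : 'I_c) (i j : 'I_n) : option G :=
  if (val (dg i j) < 4 * b)%N then Some (val_at a (dg i j) i) else None.

Lemma cell_shift a i (l : 'I_n) :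
  cell a i (i + l) = if (val l < 4 * b)%N then Some (val_at a l i) else None.
Proof. by rewrite /cell /dg (addrC i l) addrK. Qed.

Lemma cellP a i j : (cell a i j != None) = (val (dg i j) < 4 * b)%N.
Proof. by rewrite /cell; case: ifP. Qed.

Lemma card_lt (k : nat) : (k <= n)%N -> #|[set l : 'I_n | (val l < k)%N]| = k.
Proof.
move=> kn; have wi : injective (widen_ord kn) by move=> x y e; apply: val_inj; exact: (congr1 val e).
rewrite -[RHS]card_ord -(card_imset _ wi).
apply: eq_card => l; rewrite inE; apply/idP/imsetP => [lk|[x _ ->]].
  by exists (Ordinal lk) => //; apply: val_inj.
by rewrite /= ltn_ord.
Qed.

Lemma row_card a i : #|[set j : 'I_n | cell a i j != None]| = (4 * b)%N.
Proof.
rewrite -[RHS](card_lt bn) -[RHS](card_imset _ (addrI i)).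
apply: eq_card => j; rewrite in_set cellP; apply/idP/imsetP => [H|[l]].
  by exists (dg i j); rewrite ?inE // /dg addrC subrK.
by rewrite inE => Hl ->; rewrite /dg (addrC i l) addrK.
Qed.

Lemma col_card a j : #|[set i : 'I_n | cell a i j != None]| = (4 * b)%N.
Proof.
rewrite -[RHS](card_lt bn) -[RHS](card_imset _ (inv_inj (subKr j))).
apply: eq_card => i; rewrite in_set cellP; apply/idP/imsetP => [H|[l]].
  by exists (dg i j); rewrite ?inE // /dg subKr.
by rewrite inE => Hl ->; rewrite /dg subKr.
Qed.

Lemma diagP i j :
  (val (dg i j) < 4 * b)%N = [exists l : 'I_(4 * b), on_diag i j (0 + l)].
Proof.
apply/idP/existsP => [H | [l /eqP e]].
  exists (Ordinal H); rewrite /on_diag add0n.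
  have E : i + dg i j = j by rewrite /dg addrC subrK.
  by apply/eqP; rewrite -[X in _ = nat_of_ord X]E.
have Ej : j = i + inZp l.
  by apply: val_inj => /=; rewrite -e add0n modnDmr.
rewrite /dg Ej (addrC i) addrK /= modn_small //.
exact: leq_trans (ltn_ord l) bn.
Qed.

Lemma div4_lt (l : nat) : (l < 4 * b)%N -> (l %/ 4 < b)%N.
Proof. by move=> H; rewrite ltn_divLR // mulnC. Qed.

Lemma cell_inj a i j a' i' j' g :
  cell a i j = Some g -> cell a' i' j' = Some g -> (a, i, j) = (a', i', j').
Proof.
rewrite /cell; case: ifP => // L1 [E1]; case: ifP => // L2 [E2].
have E := etrans E1 (esym E2); rewrite /val_at in E.
have := congr1 (rep h d) E; rewrite !(rep_sig _ dd) => Eq0.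
have Q := iota_inj (etrans (esym (iota_rep _)) (etrans Eq0 (iota_rep _))).
rewrite Q in E; move/(sig_inj dn0 dd hn hdn): E => [e1 e2].
have ea : a = a' := congr1 (fun q => q.1.1) Q.
have eb : (inord (dg i j %/ 4) : 'I_b) = inord (dg i' j' %/ 4) := congr1 (fun q => q.1.2) Q.
have ek : i - (rr (dg i j) : nat)%:R = i' - (rr (dg i' j') : nat)%:R := congr1 snd Q.
have e3 : cc (dg i j) = cc (dg i' j').
  by move: e1; rewrite e2; case: (rr _); case: (cc _); case: (cc _).
have e4 : (dg i j %/ 4 = dg i' j' %/ 4)%N.
  by have := congr1 val eb; rewrite /= !inordK // div4_lt.
have e5 : dg i j = dg i' j'.
  apply: val_inj; apply: decode => //.
  by move: e2; rewrite /rr => /negb_inj.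
move: ek; rewrite e2 => /addIr ei.
subst i' a'; move: e5; rewrite /dg => /addIr ej.
by subst j'.
Qed.

Lemma elem_once (HG : #|G| = (c * n * (4 * b))%N) g :
  #|[set t : 'I_c * 'I_n * 'I_n | cell t.1.1 t.1.2 t.2 == Some g]| = 1%N.
Proof.
pose F := [set t : 'I_c * 'I_n * 'I_n | cell t.1.1 t.1.2 t.2 != None].
pose emb := fun (t : 'I_c * 'I_n * 'I_(4 * b)) => (t.1.1, t.1.2, t.1.2 + widen_ord bn t.2).
have emb_inj : injective emb.
  move=> [[a1 i1] l1] [[a2 i2] l2] E.
  have ea : a1 = a2 := congr1 (fun t => t.1.1) E.
  have ei : i1 = i2 := congr1 (fun t => t.1.2) E.
  have ej : i1 + widen_ord bn l1 = i2 + widen_ord bn l2 := congr1 snd E.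
  subst a2 i2; move/addrI: ej => /(congr1 val) /= el.
  by have -> : l1 = l2 by apply: val_inj.
have FE : F = emb @: setT.
  apply/setP => [[[a i] j]]; rewrite in_set /= cellP.
  apply/idP/imsetP => [H|[[[a1 i1] l1] _ E]].
    exists (a, i, Ordinal H) => //; rewrite /emb /=.
    have -> : widen_ord bn (Ordinal H) = dg i j by apply: val_inj.
    by rewrite /dg addrC subrK.
  have ei : i = i1 := congr1 (fun t => t.1.2) E.
  have ej : j = i1 + widen_ord bn l1 := congr1 snd E.
  by subst i1; rewrite ej /dg (addrC i) addrK /= ltn_ord.
have cardF : #|F| = #|G| by rewrite FE card_imset // cardsT !card_prod !card_ord HG.
pose v t := odflt 0 (cell t.1.1 t.1.2 t.2).
have vinj : {in F &, injective v}.
  move=> [[a i] j] [[a' i'] j']; rewrite !inE /= /v.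
  case E1: (cell a i j) => [x|] //; case E2: (cell a' i' j') => [y|] //= _ _ exy.
  by subst y; exact: cell_inj E1 E2.
have : g \in v @: F.
  have -> : v @: F = setT.
    by apply/eqP; rewrite eqEcard subsetT cardsT (card_in_imset vinj) cardF leqnn.
  by rewrite inE.
case/imsetP => t0 Ft0 ->.
have Ct0 : cell t0.1.1 t0.1.2 t0.2 = Some (v t0).
  by move: Ft0; rewrite inE /v; case: (cell _ _ _).
rewrite -(cards1 t0); apply: eq_card => t; rewrite !inE.
apply/eqP/eqP => [Ct|->] //.
move: t t0 Ct Ct0 {Ft0} => [[a i] j] [[a0 i0] j0] /= Ct Ct0.
exact: cell_inj Ct Ct0.
Qed.

Lemma val_at_blk a (q : 'I_b) p k : (p < 4)%N ->
  val_at a (4 * q + p) k = sig h d (rr p (+) cc p) (rr p) (iota (a, q, k - (rr p : nat)%:R)).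
Proof.
move=> p4; have [e1 e2 e3] := blk q p4.
have Er : rr (4 * q + p) = rr p by rewrite /rr e3.
have Ec : cc (4 * q + p) = cc p by rewrite /cc e2 modn_small.
by rewrite /val_at Er Ec e1 inord_val.
Qed.

Lemma row_sum a i : \sum_(j : 'I_n) odflt 0 (cell a i j) = (h + h) *+ b.
Proof.
rewrite (reindex_inj (addrI i)) /=.
pose Fn (k : nat) := if (k < 4 * b)%N then val_at a k i else 0.
transitivity (\sum_(l < n) Fn l).
  by apply: eq_bigr => l _; rewrite cell_shift /Fn; case: ifP.
rewrite -(big_mkord xpredT Fn) (big_cat_nat (leq0n (4 * b)) bn) /=.
rewrite [X in _ + X]big1_seq ?addr0; last first.
  by move=> k /andP [_]; rewrite mem_index_iota => /andP [H _]; rewrite /Fn ltnNge H.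
rewrite sum4 big_mkord.
transitivity (\sum_(q < b) (h + h)); last by rewrite sumr_const card_ord.
apply: eq_bigr => q _.
have Hq := ltn_ord q.
rewrite /Fn !ifT; try lia.
have E0 : val_at a (4 * q) i = val_at a (4 * q + 0) i by rewrite addn0.
rewrite E0 !val_at_blk // /rr /cc /= !modn_small //=.
exact: (row_blk _ dd).
Qed.

Lemma cell_shift2 a j (l : 'I_n) :
  cell a (j - l) j = if (val l < 4 * b)%N then Some (val_at a l (j - l)) else None.
Proof. by rewrite /cell /dg subKr. Qed.

Lemma col_sum a j : \sum_(i : 'I_n) odflt 0 (cell a i j) = (h + d + (h + d)) *+ b.
Proof.
rewrite (reindex_inj (inv_inj (subKr j))) /=.
pose Fn (k : nat) := if (k < 4 * b)%N then val_at a k (j - k%:R) else 0.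
transitivity (\sum_(l < n) Fn l).
  by apply: eq_bigr => l _; rewrite cell_shift2 /Fn natr_Zp; case: ifP.
rewrite -(big_mkord xpredT Fn) (big_cat_nat (leq0n (4 * b)) bn) /=.
rewrite [X in _ + X]big1_seq ?addr0; last first.
  by move=> k /andP [_]; rewrite mem_index_iota => /andP [H _]; rewrite /Fn ltnNge H.
rewrite sum4 big_mkord.
transitivity (\sum_(q < b) (h + d + (h + d))); last by rewrite sumr_const card_ord.
apply: eq_bigr => q _.
have Hq := ltn_ord q.
rewrite /Fn !ifT; try lia.
have E0 : forall k, val_at a (4 * q) k = val_at a (4 * q + 0) k by move=> k; rewrite addn0.
rewrite E0 !val_at_blk // /rr /cc /= !modn_small //=.
have k1 : j - (4 * q)%:R - 1 = j - (4 * q + 1)%:R - 0.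
  by rewrite natrD subr0 opprD addrA.
have k3 : j - (4 * q + 2)%:R - 1 = j - (4 * q + 3)%:R - 0.
  by rewrite (_ : 4 * q + 3 = 4 * q + 2 + 1)%N ?natrD ?subr0 ?opprD ?addrA // -addnA.
rewrite k1 k3.
exact: col_blk.
Qed.

End Construction.

Local Close Scope ring_scope.

Theorem proposition5p8 (b n c : nat) :
  (0 < b)%N -> (0 < n)%N -> (0 < c)%N -> (4 <= 4 * b <= n)%N ->
  forall G : finZmodType, #|G| = (4 * n * b * c)%N ->
  exists A : arrays G n n c,
    @is_MRS G n n (4 * b) (4 * b) c A /\ @diagonal_arrays G n (4 * b) c A.
Proof.
case: b => [|b'] // _ _; case: c => [|c'] // _ /andP [_ bn] G HG.
have [m em] : exists m, n = m.+4 by exists (n - 4)%N; lia.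
subst n.
have d4 : (4 %| #|G|)%N by rewrite HG -!mulnA dvdn_mulr.
have [h [d [dn0 dd hn hdn]]] := klein_exists d4.
have HT : (4 * #|{: 'I_c'.+1 * 'I_b'.+1 * 'I_m.+4}| <= #|G|)%N.
  rewrite HG !card_prod !card_ord; nia.
have [iota [iinj irep]] := exists_iota h dd HT.
exists (cell h d iota); split.
  split.
  - by rewrite HG; nia.
  - apply: (elem_once dn0 dd hn hdn bn iinj irep); rewrite HG; nia.
  - exact: row_card.
  - exact: col_card.
  exists ((h + h) *+ b'.+1)%R, ((h + d + (h + d)) *+ b'.+1)%R; split => a.
    by move=> i; apply: row_sum.
  by move=> j; apply: col_sum.
move=> a; exists 0%R => i j.
transitivity (val (dg i j) < 4 * b'.+1)%N; first by rewrite /cell; case: ifP.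
exact: diagP.
Qed.
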